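(* Let $F(\mathbf{w})=\mathbb{E}_{\mathbf{x}\sim\mathcal{X}}[f(\mathbf{w},\mathbf{x})]$ satisfy (PL) with constant $\alpha>0$, (Smooth) with constant $\beta>0$, and (Bounded variance) with constant $V\ge0$; let $F^*=\min_{\mathbf{w}}F(\mathbf{w})$. Let $S$ be a positive integer and $\eta\in(0,2(S\beta)^{-1})$; define $\gamma=\eta\alpha(2-\eta\beta)$, $\Delta=\frac{1}{2\gamma}\eta^2\beta V$, and $\xi(S)=\frac{2-\eta\beta}{2-S\eta\beta}$. Run scaled SGD at scale $S$ with constant learning rate $\mathrm{lr}(t)=S\eta$ for $T$ iterations from $\mathbf{w}_0$. Then \[ \mathbb{E}[F(\mathbf{w}_T)-F^*]\le\Big(1-\frac{\gamma}{\xi(S)}\Big)^{ST}[F(\mathbf{w}_0)-F^*]+\xi(S)\,\Delta. \]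
   Context: Setting: $\mathcal{X}$ is a distribution over batches; $f(\cdot,\mathbf{x})$ and $F$ are differentiable with $\mathbb{E}_{\mathbf{x}\sim\mathcal{X}}[\nabla_{\mathbf{w}}f(\mathbf{w},\mathbf{x})]=\nabla F(\mathbf{w})$. $\sigma_{\mathbf{g}}^2(\mathbf{w})=\mathrm{tr}\big(\mathrm{cov}_{\mathbf{x}\sim\mathcal{X}}(\nabla_{\mathbf{w}}f(\mathbf{w},\mathbf{x}),\nabla_{\mathbf{w}}f(\mathbf{w},\mathbf{x}))\big)$. (PL): $F(\mathbf{w})-F^*\le\frac1{2\alpha}\|\nabla F(\mathbf{w})\|^2$ for all $\mathbf{w}$. (Smooth): $\|\nabla F(\mathbf{w})-\nabla F(\mathbf{w}')\|\le\beta\|\mathbf{w}-\mathbf{w}'\|$. (Bounded variance): $\sigma_{\mathbf{g}}^2(\mathbf{w})\le V$ for all $\mathbf{w}$. Scaled SGD with scale $S$, schedule $\mathrm{lr}$, $T$ iterations: for $t=0,\dots,T-1$, draw $S$ batches $\mathbf{x}^{(1)},\dots,\mathbf{x}^{(S)}\sim\mathcal{X}$ independently of each other and of the past, set $\bar{\mathbf{g}}_t=\frac1S\sum_{i=1}^S\nabla_{\mathbf{w}}f(\mathbf{w}_t,\mathbf{x}^{(i)})$ and $\mathbf{w}_{t+1}=\mathbf{w}_t-\mathrm{lr}(t)\bar{\mathbf{g}}_t$; output $\mathbf{w}_T$. *)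

(* Defs.v *)
From HB Require Import structures.
From mathcomp Require Import all_boot all_order all_algebra.
From mathcomp Require Import all_classical all_reals all_analysis.
Set Implicit Arguments. Unset Strict Implicit. Unset Printing Implicit Defensive.
Import Order.TTheory GRing.Theory Num.Theory.
Import numFieldNormedType.Exports.
Local Open Scope ring_scope.
Local Open Scope classical_set_scope.

Section Defs.
Context {R : realType} {dmn : nat}.
Local Notation vec := 'rV[R]_dmn.

Definition dotv (u v : vec) : R := \sum_(i < dmn) u ord0 i * v ord0 i.
Definition sqnorm (u : vec) : R := dotv u u.

Definition has_gradient (F : vec -> R) (gF : vec -> vec) : Prop :=
  forall w, differentiable F w /\ forall h, 'd F w h = dotv (gF w) h.

Context {d : measure_display} {T : measurableType d}.

Definition trace_cov (X : probability T R) (g : T -> vec) : \bar R :=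
  (\sum_(i < dmn)
     \int[X]_x (((g x ord0 i) - fine (\int[X]_y (g y ord0 i)%:E)) ^+ 2)%:E)%E.

(* Expectation over the S independent batches drawn in one step of scaled SGD:
   iter_batches k h acc = E_{x_1..x_k iid X}[ h (acc + sum_j gf x_j) ] *)
Fixpoint iter_batches (X : probability T R) (gf : T -> vec) (k : nat)
    (h : vec -> \bar R) (acc : vec) : \bar R :=
  match k with
  | 0 => h acc
  | k'.+1 => (\int[X]_x iter_batches X gf k' h (acc + gf x))%E
  end.

Definition sgd_step (X : probability T R) (gradf : vec -> T -> vec)
    (S : nat) (lr : R) (g : vec -> \bar R) (w : vec) : \bar R :=
  iter_batches X (gradf w) S (fun acc => g (w - lr *: (S%:R^-1 *: acc))) 0.

(* sgd_expect t0 n g w = E[g(w_{t0+n})] when scaled SGD is run from w_{t0} = w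
   at times t0, ..., t0+n-1 with schedule lr, drawing fresh batches at each
   step independently of the past. *)
Fixpoint sgd_expect (X : probability T R) (gradf : vec -> T -> vec)
    (S : nat) (lr : nat -> R) (t0 n : nat) (g : vec -> \bar R) (w : vec)
    : \bar R :=
  match n with
  | 0 => g w
  | n'.+1 => sgd_step X gradf S (lr t0)
               (sgd_expect X gradf S lr t0.+1 n' g) w
  end.

End Defs.

(* Main.v *)
Require Import Defs.
From HB Require Import structures.
From mathcomp Require Import all_boot all_order all_algebra.
From mathcomp Require Import all_classical all_reals all_analysis.
From mathcomp Require Import ring lra.
Import Order.TTheory GRing.Theory Num.Theory.
Import numFieldNormedType.Exports.
Local Open Scope ring_scope.

Module Aux.
Local Open Scope classical_set_scope.
Section A.
Context {R : realType} {dmn : nat}.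
Local Notation vec := 'rV[R]_dmn.

Lemma dotvC (u v : vec) : dotv u v = dotv v u.
Proof. by rewrite /dotv; apply: eq_bigr => i _; rewrite mulrC. Qed.

Lemma dotvDl (u v z : vec) : dotv (u + v) z = dotv u z + dotv v z.
Proof. by rewrite /dotv -big_split; apply: eq_bigr => i _; rewrite !mxE mulrDl. Qed.

Lemma dotvZl a (u v : vec) : dotv (a *: u) v = a * dotv u v.
Proof. by rewrite /dotv mulr_sumr; apply: eq_bigr => i _; rewrite !mxE mulrA. Qed.

Lemma dotvNl (u v : vec) : dotv (- u) v = - dotv u v.
Proof. by rewrite -scaleN1r dotvZl mulN1r. Qed.

Lemma dotvBl (u v z : vec) : dotv (u - v) z = dotv u z - dotv v z.
Proof. by rewrite dotvDl dotvNl. Qed.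

Lemma dotvDr (u v z : vec) : dotv z (u + v) = dotv z u + dotv z v.
Proof. by rewrite dotvC dotvDl !(dotvC z). Qed.

Lemma dotvZr a (u v : vec) : dotv v (a *: u) = a * dotv v u.
Proof. by rewrite dotvC dotvZl dotvC. Qed.

Lemma dotvNr (u v : vec) : dotv v (- u) = - dotv v u.
Proof. by rewrite dotvC dotvNl dotvC. Qed.

Lemma dotvBr (u v z : vec) : dotv z (u - v) = dotv z u - dotv z v.
Proof. by rewrite dotvDr dotvNr. Qed.

Lemma dotv0l (u : vec) : dotv 0 u = 0.
Proof. by rewrite /dotv big1 // => i _; rewrite mxE mul0r. Qed.

Lemma dotv0r (u : vec) : dotv u 0 = 0.
Proof. by rewrite dotvC dotv0l. Qed.

Lemma sqnorm_ge0 (u : vec) : 0 <= sqnorm u.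
Proof. by rewrite /sqnorm /dotv sumr_ge0 // => i _; rewrite -expr2 sqr_ge0. Qed.

Lemma sqnormD (u v : vec) : sqnorm (u + v) = sqnorm u + 2 * dotv u v + sqnorm v.
Proof.
rewrite /sqnorm dotvDl !dotvDr (dotvC v u); ring.
Qed.

Lemma sqnormZ a (u : vec) : sqnorm (a *: u) = a ^+ 2 * sqnorm u.
Proof. by rewrite /sqnorm dotvZl dotvZr; ring. Qed.

Lemma sqnormN (u : vec) : sqnorm (- u) = sqnorm u.
Proof. by rewrite -scaleN1r sqnormZ; ring. Qed.

Lemma descent (F : vec -> R) gradF beta :
  has_gradient F gradF -> 0 < beta ->
  (forall w w', Num.sqrt (sqnorm (gradF w - gradF w'))
                 <= beta * Num.sqrt (sqnorm (w - w'))) ->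
  forall w h, F (w + h) <= F w + dotv (gradF w) h + beta / 2 * sqnorm h.
Proof.
move=> hg b0 sm w h.
set k1 := dotv (gradF w) h; set k2 := beta / 2 * sqnorm h.
pose psi := fun t : R => F (w + t *: h).
have dpsi : forall t : R, is_derive t (1:R) psi (dotv (gradF (w + t *: h)) h).
  move=> t.
  have eqf : (fun s : R => s^-1 *: ((psi \o shift t) (s *: 1) - psi t)) =
    (fun s : R => s^-1 *: ((F \o shift (w + t *: h)) (s *: h) - F (w + t *: h))).
    apply: funext => s /=; rewrite /psi /=. have -> : s *: (1:R) = s by rewrite /GRing.scale /= mulr1. rewrite scalerDl.
    by rewrite addrCA.
  have [dF gF] := hg (w + t *: h).
  have dv : derivable F (w + t *: h) h by exact: diff_derivable.
  apply: DeriveDef.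
    by rewrite /derivable eqf.
  by rewrite /derive eqf -/(derive F _ h) deriveE // gF.
pose phi := psi - (k1 \*: id) - (k2 \*: (id ^+ 2)).
have dphi : forall t : R, is_derive t (1:R) phi
   (dotv (gradF (w + t *: h)) h - k1 - k2 * (2 * t)).
  move=> t; apply: is_derive_eq.
  rewrite /= /GRing.scale /=; ring.
have cphi : {within `[0, 1], continuous phi}.
  apply: continuous_subspaceT => t.
  apply: differentiable_continuous; apply/derivable1_diffP.
  by have [] := dphi t.
have [c /andP[c0 c1] eqc] := MVT ltr01 (fun x _ => dphi x) cphi.
rewrite !bnd_simp in c0 c1.
have : phi 1 <= phi 0.
  rewrite -subr_le0 eqc subr0 mulr1.
  set a := gradF (w + c *: h) - gradF w.
  have sa : sqnorm a <= beta ^+ 2 * (c ^+ 2 * sqnorm h).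
    have := sm (w + c *: h) w; rewrite -/a (_ : w + c *: h - w = c *: h); last by rewrite addrAC subrr add0r.
    rewrite sqnormZ => H.
    have e1 := sqr_sqrtr (sqnorm_ge0 a).
    have e2 := sqr_sqrtr (sqnorm_ge0 h).
    have p1 := sqrtr_ge0 (sqnorm a).
    have p2 := sqrtr_ge0 (sqnorm h).
    rewrite sqrtrM ?sqr_ge0 // sqrtr_sqr in H.
    rewrite (ger0_norm (ltW c0)) in H. rewrite -[sqnorm a]e1 -[sqnorm h]e2.
    set x := Num.sqrt (sqnorm a) in H p1 *; set y := Num.sqrt (sqnorm h) in H p2 *.
    have hb : 0 <= beta * (c * y) by rewrite !mulr_ge0 // ltW.
    nra.
  have hp := sqnorm_ge0 (a - (beta * c) *: h).
  rewrite sqnormD sqnormN dotvNr dotvZr sqnormZ in hp.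
  have ea : dotv (gradF (w + c *: h)) h = dotv a h + k1 by rewrite dotvBl /k1; ring.
  rewrite ea /k2.
  have sh := sqnorm_ge0 h.
  have hbc : 0 < beta * c by rewrite mulr_gt0.
  suff : dotv a h <= beta * c * sqnorm h by move=> ?; nra.
  nra.
have ephi : forall t, phi t = F (w + t *: h) - k1 * t - k2 * t ^+ 2.
  by move=> t; rewrite /phi /psi !fctE /=.
rewrite !ephi scale0r addr0 scale1r; lra.
Qed.

End A.

Lemma le_int_any d (T : measurableType d) (R : realType) (mu : measure T R)
  (f g : T -> \bar R) : (forall x, (f x <= g x)%E) ->
  (\int[mu]_x f x <= \int[mu]_x g x)%E.
Proof.
move=> fg; rewrite (integralE _ _ f) (integralE _ _ g); apply: leeB.
  rewrite !ge0_integralTE //; apply: ereal_sup_le => _ [h hf <-]; exists h => //.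
  move=> x; apply: le_trans (hf x) _.
  apply: (@funepos_le _ _ setT f g); last by rewrite in_setT.
  by move=> y _; exact: fg.
rewrite !ge0_integralTE //; apply: ereal_sup_le => _ [h hf <-]; exists h => //.
move=> x; apply: le_trans (hf x) _.
apply: (@funeneg_le _ _ setT f g); last by rewrite in_setT.
  by move=> y _; exact: fg.
Qed.

Section B.
Context {R : realType} {dmn : nat} {d : measure_display} {T : measurableType d}.
Local Notation vec := 'rV[R]_dmn.

Lemma iter_mono (X : probability T R) (gf : T -> vec) k (h h' : vec -> \bar R) :
  (forall a, (h a <= h' a)%E) -> forall acc,
  (iter_batches X gf k h acc <= iter_batches X gf k h' acc)%E.
Proof.
move=> hh; elim: k => [|k IH] acc /=; first exact: hh.
by apply: le_int_any => x; exact: IH.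
Qed.

Lemma iter_le0 (X : probability T R) (gf : T -> vec) k (h : vec -> \bar R) :
  (forall a, (h a <= 0)%E) -> forall acc, (iter_batches X gf k h acc <= 0)%E.
Proof.
move=> hh; elim: k => [|k IH] acc /=; first exact: hh.
apply: le_trans (_ : (\int[X]_x (cst 0%E) x <= 0)%E).
  by apply: le_int_any => x; exact: IH.
by rewrite integral0.
Qed.

Definition quad (A : R) (u : vec) (c : R) (a : vec) := A + dotv u a + c * sqnorm a.

Variables (X : probability T R) (g : T -> vec) (m : vec) (V : R).
Hypothesis Hmg : forall i, measurable_fun setT (fun x => g x ord0 i).
Hypothesis Hig : forall i, X.-integrable setT (fun x => (g x ord0 i)%:E).
Hypothesis Hm : forall i, (\int[X]_x (g x ord0 i)%:E)%E = (m ord0 i)%:E.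
Hypothesis HV : (trace_cov X g <= V%:E)%E.

Let y i x := g x ord0 i - m ord0 i.

Lemma y_int i : X.-integrable setT (fun x => (y i x)%:E).
Proof.
have -> : (fun x => (y i x)%:E) =
   (fun x => (g x ord0 i)%:E - (EFin \o cst (m ord0 i)) x)%E.
  by apply: funext => x; rewrite /y EFinB.
apply: integrableB => //; exact: finite_measure_integrable_cst.
Qed.

Lemma int_cstE r : (\int[X]_x (EFin \o cst r) x)%E = r%:E.
Proof.
have := integral_cst X (@measurableT _ T) r%:E; move=> ->.
rewrite -[RHS]mule1; congr (_ * _)%E; exact: probability_setT.
Qed.

Lemma y_int0 i : (\int[X]_x (y i x)%:E)%E = 0%E.
Proof.
have -> : (fun x => (y i x)%:E) =
   (fun x => (g x ord0 i)%:E - (EFin \o cst (m ord0 i)) x)%E.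
  by apply: funext => x; rewrite /y EFinB.
rewrite integralB //; last exact: finite_measure_integrable_cst.
by rewrite Hm int_cstE subee.
Qed.

Lemma trace_covE : trace_cov X g = (\sum_(i < dmn) \int[X]_x ((y i x) ^+ 2)%:E)%E.
Proof. by rewrite /trace_cov; apply: eq_bigr => i _; rewrite Hm. Qed.

Lemma y2_int i : X.-integrable setT (fun x => ((y i x) ^+ 2)%:E).
Proof.
apply/integrableP; split.
  apply/measurable_realfun.measurable_EFinP; rewrite /y.
  apply: measurable_realfun.measurable_funX.
  exact: (measurable_realfun.measurable_funB (Hmg i) (measurable_cst _)).
have e : forall x, `|((y i x) ^+ 2)%:E|%E = ((y i x) ^+ 2)%:E.
  by move=> x; rewrite gee0_abs // lee_fin sqr_ge0.
under eq_integral do rewrite e.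
apply: (le_lt_trans _ (ltry V)).
apply: le_trans HV; rewrite trace_covE (bigD1 i) //=.
apply: leeDl; apply: sume_ge0 => j _; apply: integral_ge0 => x _.
by rewrite lee_fin sqr_ge0.
Qed.

Lemma int_cst' r : (\int[X]_x r%:E)%E = r%:E.
Proof. exact: int_cstE. Qed.

Lemma qy_int (q : vec) i : X.-integrable setT (fun x => (q ord0 i * y i x)%:E).
Proof.
rewrite (_ : (fun x => _) = (fun x => (q ord0 i)%:E * (y i x)%:E)%E).
  exact: integrableZl (y_int i).
by apply: funext => x; rewrite EFinM.
Qed.

Lemma quad_int A u c acc : 0 <= c ->
  (\int[X]_x (quad A u c (acc + g x))%:E <=
   (quad (A + dotv u m + c * (sqnorm m + V)) (u + (2 * c) *: m) c acc)%:E)%E.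
Proof.
move=> c0.
set b := acc + m; set q := u + (2 * c) *: b.
have pe : forall x, quad A u c (acc + g x) = quad A u c b +
   \sum_(i < dmn) (q ord0 i * y i x) + c * \sum_(i < dmn) (y i x ^+ 2).
  move=> x.
  have -> : acc + g x = b + (g x - m).
    by apply/rowP => j; rewrite /b !mxE; ring.
  have e1 : \sum_(i < dmn) (q ord0 i * y i x) = dotv q (g x - m).
    by rewrite /dotv; apply: eq_bigr => i _; rewrite !mxE.
  have e2 : \sum_(i < dmn) (y i x ^+ 2) = sqnorm (g x - m).
    by rewrite /sqnorm /dotv; apply: eq_bigr => i _; rewrite !mxE expr2.
  rewrite e1 e2 /quad sqnormD dotvDr /q dotvDl dotvZl; ring.
under eq_integral do rewrite pe EFinD EFinD EFinM -!sumEFin.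
have I1 : X.-integrable setT (fun x => \sum_(i < dmn) (q ord0 i * y i x)%:E)%E.
  by apply: integrable_sum => // i _; exact: qy_int.
have I2 : X.-integrable setT (fun x => \sum_(i < dmn) ((y i x) ^+ 2)%:E)%E.
  by apply: integrable_sum => // i _; exact: y2_int.
rewrite integralD //; last exact: integrableZl.
  rewrite integralD //; last exact: finite_measure_integrable_cst.
  rewrite int_cst' integralZl // integral_sum //; last by move=> i; exact: qy_int.
  rewrite integral_sum //; last by move=> i; exact: y2_int.
  have -> : (\sum_(i < dmn) \int[X]_x (q ord0 i * y i x)%:E = 0)%E.
    apply: big1 => i _.
    under eq_integral do rewrite EFinM.
    by rewrite integralZl ?y_int0 ?mule0 //; exact: y_int.
  rewrite -trace_covE adde0.
  apply: (@le_trans _ _ ((quad A u c b)%:E + c%:E * V%:E)%E).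
    by apply: leeD => //; apply: lee_wpmul2l => //; rewrite lee_fin.
  rewrite -EFinM -EFinD lee_fin.
  rewrite /quad /b sqnormD !dotvDr dotvDl dotvZl (dotvC m acc). lra.
by apply: integrableD => //; exact: finite_measure_integrable_cst.
Qed.

Lemma iter_quad c : 0 <= c -> forall k A u acc,
  (iter_batches X g k (fun a => (quad A u c a)%:E) acc <=
   (quad (A + k%:R * dotv u m + c * (k%:R ^+ 2 * sqnorm m + k%:R * V))
         (u + (2 * c * k%:R) *: m) c acc)%:E)%E.
Proof.
move=> c0; elim=> [|k IH] A u acc /=.
  by rewrite lee_fin /quad dotvDl dotvZl; nra.
apply: le_trans.
  by apply: le_int_any => x; exact: IH.
apply: le_trans; first exact: quad_int.
rewrite lee_fin /quad -natr1 !dotvDl !dotvZl -/(sqnorm m).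
nra.
Qed.

End B.

End Aux.
Import Aux.

Lemma bernoulli_le (R : realFieldType) (x : R) n : 0 <= x <= 1 ->
  1 - n%:R * x <= (1 - x) ^+ n.
Proof.
move=> /andP[x0 x1]; elim: n => [|n IH]; first by rewrite expr0 mul0r subr0.
rewrite exprS -natr1.
have h1 : 0 <= 1 - x by rewrite subr_ge0.
have hn : 0 <= n%:R :> R by [].
have := mulr_ge0 hn (sqr_ge0 x); have := ler_wpM2l h1 IH; nra.
Qed.

Lemma pow_le (R : realFieldType) (a b : R) n : 0 <= a -> a <= b -> a ^+ n <= b ^+ n.
Proof.
move=> a0 ab; elim: n => [|n IH]; first by rewrite !expr0.
by rewrite !exprS; apply: ler_pM => //; exact: exprn_ge0.
Qed.

Lemma le_from_diff (R : realFieldType) (z x y : R) : y - x = z -> 0 <= z -> x <= y.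
Proof. by move=> <-; rewrite subr_ge0. Qed.

Theorem theorem3 (R : realType) (dmn : nat) (d : measure_display)
  (T : measurableType d) (X : probability T R)
  (f : 'rV[R]_dmn -> T -> R) (gradf : 'rV[R]_dmn -> T -> 'rV[R]_dmn)
  (F : 'rV[R]_dmn -> R) (gradF : 'rV[R]_dmn -> 'rV[R]_dmn)
  (Fstar alpha beta V eta : R) (S T_it : nat) (w0 : 'rV[R]_dmn) :
  (forall w, X.-integrable setT (fun x => (f w x)%:E) /\
             (\int[X]_x (f w x)%:E)%E = (F w)%:E) ->
  (forall x, has_gradient (fun w => f w x) (fun w => gradf w x)) ->
  has_gradient F gradF ->
  (forall w (i : 'I_dmn), measurable_fun setT (fun x => gradf w x ord0 i)) ->
  (forall w (i : 'I_dmn), X.-integrable setT (fun x => (gradf w x ord0 i)%:E) /\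
     (\int[X]_x (gradf w x ord0 i)%:E)%E = (gradF w ord0 i)%:E) ->
  (exists wstar, F wstar = Fstar) -> (forall w, Fstar <= F w) ->
  0 < alpha -> (forall w, F w - Fstar <= (2 * alpha)^-1 * sqnorm (gradF w)) ->
  0 < beta ->
  (forall w w', Num.sqrt (sqnorm (gradF w - gradF w'))
                 <= beta * Num.sqrt (sqnorm (w - w'))) ->
  0 <= V -> (forall w, (trace_cov X (gradf w) <= V%:E)%E) ->
  (0 < S)%N ->
  0 < eta -> eta < 2 / (S%:R * beta) ->
  let gamma := eta * alpha * (2 - eta * beta) in
  let Delta := (2 * gamma)^-1 * (eta ^+ 2 * beta * V) in
  let xi := (2 - eta * beta) / (2 - S%:R * eta * beta) in
  (sgd_expect X gradf S (fun _ => (S%:R * eta)%R) 0 T_it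
     (fun w => (F w - Fstar)%:E) w0
   <= ((1 - gamma / xi) ^+ (S * T_it)%N * (F w0 - Fstar) + xi * Delta)%R%:E)%E.
Proof.
move=> _ _ HgF Hmeas Hunb _ Hmin a0 PL b0 sm V0 HV S0 e0 eS. cbv zeta.
set gamma := eta * alpha * (2 - eta * beta).
set Delta := (2 * gamma)^-1 * (eta ^+ 2 * beta * V).
set xi := (2 - eta * beta) / (2 - S%:R * eta * beta).
have hS : 0 < S%:R :> R by rewrite ltr0n.
have hS1 : 1 <= S%:R :> R by rewrite ler1n.
have hu : S%:R * eta * beta < 2.
  by move: eS; rewrite ltr_pdivlMr ?mulr_gt0 // mulrCA mulrA.
have heb : eta * beta < 2.
  apply: le_lt_trans hu; rewrite -mulrA ler_peMl //; apply: mulr_ge0; exact: ltW.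
have hx0 : 0 < 2 - eta * beta by rewrite subr_gt0.
have hxS : 0 < 2 - S%:R * eta * beta by rewrite subr_gt0.
have hgam : 0 < gamma by rewrite /gamma !mulr_gt0.
have hxi : 0 < xi by rewrite /xi divr_gt0.
have hDel : 0 <= Delta.
  rewrite /Delta; apply: mulr_ge0; first by rewrite invr_ge0; apply: ltW; rewrite mulr_gt0.
  by apply: mulr_ge0 => //; apply: mulr_ge0; [exact: sqr_ge0 | exact: ltW].
set K := xi * Delta.
have hK : 0 <= K by rewrite /K mulr_ge0 // ltW.
have [ab|ba] := lerP alpha beta; last first.
  have zero : forall w, F w - Fstar = 0.
    move=> w; set m := gradF w.
    have hd := descent _ _ _ HgF b0 sm w ((- beta^-1) *: m).
    rewrite dotvZr sqnormZ -/(sqnorm m) in hd.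
    have h1 := Hmin (w + (- beta^-1) *: m).
    have h2 := PL w; have h3 := Hmin w; have sm0 := sqnorm_ge0 m.
    set s := sqnorm m in hd h2 sm0 *.
    set ib := beta^-1 in hd.
    have hib : beta * ib = 1 by rewrite /ib mulfV // gt_eqF.
    have hia : 2 * alpha * (2 * alpha)^-1 = 1 by rewrite mulfV // gt_eqF // mulr_gt0.
    set ia := (2 * alpha)^-1 in h2 hia.
    have e1 : Fstar <= F w - ib * s / 2.
      have : beta / 2 * ((- ib) ^+ 2 * s) = ib * s / 2.
        rewrite sqrrN expr2; have -> : beta / 2 * (ib * ib * s) = (beta * ib) * ib * s / 2 by ring.
        by rewrite hib mul1r.
      nra.
    have hs : s * (ib - 2 * ia) <= 0.
      nra.
    have ibia : 2 * ia < ib.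
      rewrite /ia /ib invfM mulrA mulfV ?mul1r; last by [].
      by rewrite ltf_pV2 // ?posrE.
    have : s <= 0 by nra.
    move=> sle; apply/eqP; rewrite eq_le; apply/andP; split; nra.
  have g0 : (fun w => (F w - Fstar)%:E) = (fun _ => 0%:E).
    by apply: funext => w; rewrite zero.
  rewrite g0 zero mulr0 add0r.
  have : forall n t0 w, (sgd_expect X gradf S (fun _ => (S%:R * eta)%R) t0 n
        (fun _ => 0%:E) w <= 0)%E.
    elim=> [|n IH] t0 w //=.
    by rewrite /sgd_step; apply: iter_le0 => acc; exact: IH.
  move=> /(_ T_it 0%N w0) h; apply: le_trans h _.
  by rewrite lee_fin.
set s := S%:R * eta.
have hs : 0 < s by rewrite /s mulr_gt0.
set c0 := 1 - s * alpha * (2 - s * beta).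
set Dc := S%:R * beta * eta ^+ 2 * V / 2.
have hc0 : 0 <= c0.
  have h1 := sqr_ge0 (1 - s * alpha).
  have h2 : 0 <= s ^+ 2 * alpha * (beta - alpha).
    by rewrite mulr_ge0 ?mulr_ge0 ?sqr_ge0 ?subr_ge0 // ltW.
  rewrite /c0; nra.
have step : forall a b w, 0 <= a ->
   (sgd_step X gradf S s (fun w' => (a * (F w' - Fstar) + b)%:E) w <=
    (a * (c0 * (F w - Fstar) + Dc) + b)%:E)%E.
  move=> a b w ha; rewrite /sgd_step.
  set m := gradF w.
  set A := a * (F w - Fstar) + b.
  set cc := a * (beta / 2 * eta ^+ 2).
  have hcc : 0 <= cc by rewrite /cc mulr_ge0 // mulr_ge0 ?sqr_ge0 // divr_ge0 // ltW.
  apply: le_trans.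
    apply: (@iter_mono R dmn d T X (gradf w) S _ (fun acc => (quad A ((- (a * eta)) *: m) cc acc)%:E)).
    move=> acc.
    have -> : w - s *: (S%:R^-1 *: acc) = w + (- eta) *: acc.
      rewrite scalerA /s mulrAC mulfV ?mul1r ?scaleNr //; exact: lt0r_neq0.
    have hd := descent _ _ _ HgF b0 sm w ((- eta) *: acc).
    rewrite lee_fin /quad /A /cc dotvZl.
    rewrite dotvZr sqnormZ sqrrN in hd.
    have := ler_wpM2l ha hd. nra.
  apply: le_trans.
    apply: (@iter_quad R dmn d T X (gradf w) m V (Hmeas w) (fun i => (Hunb w i).1)
             (fun i => (Hunb w i).2) (HV w) cc hcc S A _ 0).
  rewrite lee_fin /quad dotv0r /sqnorm dotv0l !addr0 mulr0 addr0.
  rewrite dotvZl -/(sqnorm m).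
  have hPL := PL w.
  have hm := sqnorm_ge0 m.
  set P := F w - Fstar in hPL *.
  set q := sqnorm m in hPL hm *.
  have hPL2 : 2 * alpha * P <= q.
    have := ler_wpM2l (ltW (mulr_gt0 (ltr0Sn _ 1) a0)) hPL.
    by rewrite mulrA mulfV ?mul1r // gt_eqF // mulr_gt0.
  have hk : 0 <= s * (2 - s * beta) by rewrite mulr_ge0 // ltW.
  have hPL3 : 0 <= q - 2 * alpha * P by rewrite subr_ge0.
  have := mulr_ge0 (mulr_ge0 ha hk) hPL3.
  rewrite /c0 /Dc /cc /s /A => H.
  apply: (@le_from_diff R (a * (S%:R * eta * (2 - S%:R * eta * beta)) * (q - 2 * alpha * P) / 2)).
    by rewrite /P; field.
  by apply: divr_ge0.
have hDK : Dc = (1 - c0) * K.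
  rewrite /Dc /c0 /K /xi /Delta /gamma /s. field.
  by rewrite ?(gt_eqF hx0) ?(gt_eqF a0) ?(gt_eqF e0) ?(gt_eqF hxS).
have main : forall n t0 w, (sgd_expect X gradf S (fun=> s) t0 n
     (fun w => (F w - Fstar)%:E) w <=
     (c0 ^+ n * (F w - Fstar) + (1 - c0 ^+ n) * K)%:E)%E.
  elim=> [|n IH] t0 w /=.
    by rewrite expr0 mul1r subrr mul0r addr0.
  apply: (@le_trans _ _ (sgd_step X gradf S s
     (fun w' => (c0 ^+ n * (F w' - Fstar) + (1 - c0 ^+ n) * K)%:E) w)).
    by rewrite /sgd_step; apply: iter_mono => acc; exact: IH.
  apply: le_trans (step _ _ w (exprn_ge0 n hc0)) _.
  rewrite lee_fin hDK exprS.
  by apply: (@le_from_diff R 0); [ring | exact: lexx].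
apply: le_trans (main T_it 0%N w0) _; rewrite lee_fin.
set x := eta * alpha * (2 - s * beta).
have gx : gamma / xi = x.
  rewrite /gamma /xi /x /s. field.
  by rewrite ?(gt_eqF hx0) ?(gt_eqF a0) ?(gt_eqF e0) ?(gt_eqF hxS).
have hxx0 : 0 <= x by rewrite /x mulr_ge0 ?mulr_ge0 // ltW // subr_gt0.
have hSx : S%:R * x <= 1.
  have e : S%:R * x = s * alpha * (2 - s * beta) by rewrite /x /s; ring.
  have h1 : 0 <= (beta - alpha) * (s * (2 - s * beta)).
    by rewrite mulr_ge0 ?subr_ge0 // mulr_ge0 // ltW // subr_gt0.
  have h2 := sqr_ge0 (s * beta - 1).
  rewrite e; nra.
have hx1 : x <= 1.
  apply: le_trans hSx; rewrite ler_peMl //.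
have hc0q : c0 <= (1 - x) ^+ S.
  rewrite (_ : c0 = 1 - S%:R * x); last by rewrite /c0 /x /s; ring.
  by apply: bernoulli_le; rewrite hxx0 hx1.
rewrite gx exprM.
have hpow := @pow_le R _ _ T_it hc0 hc0q.
have hP : 0 <= F w0 - Fstar by rewrite subr_ge0.
have := ler_wpM2r hP hpow. have := mulr_ge0 (exprn_ge0 T_it hc0) hK.
lra.
Qed.
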